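(* Let $\mathfrak{X}=(X,\{R_i\}_{i=0}^{d+1})$ be a commutative association scheme with $R_d^\top=R_{d+1}$ and $R_i^\top=R_i$ for $0\le i\le d-1$, whose symmetrization $\tilde{\mathfrak X}=(X,\{\tilde R_i\}_{i=0}^d)$ ($\tilde R_i=R_i$ for $i\le d-1$, $\tilde R_d=R_d\cup R_{d+1}$) is amorphic, with primitive idempotents $\tilde E_0,\dots,\tilde E_d$ numbered so that, with $k_i$ the valency of $\tilde R_i$, the adjacency matrix $\tilde A_i$ of $\tilde R_i$ satisfies $\tilde A_i\tilde E_0=k_i\tilde E_0$, $\tilde A_i\tilde E_i=b_i\tilde E_i$, and $\tilde A_i\tilde E_j=a_i\tilde E_j$ for $1\le j\le d$, $j\neq i$, with $a_i\ne b_i$ ($1\le i\le d$). Let $d\geq3$. If $1\leq i<j\leq d$, then $a_i+b_j=a_j+b_i$.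
   Context: Association scheme: finite set $X$ with a partition of $X\times X$ into relations $R_0$ (diagonal), $R_1,\dots$, closed under transposition, with constant intersection numbers; commutative if these are symmetric in the two lower indices. Adjacency matrices are the $01$-matrices of the relations; primitive idempotents $E_0=J/|X|,\dots$ form a basis of the Bose–Mesner algebra with $A_iE_j$ a scalar multiple of $E_j$. A symmetric scheme is amorphic if merging the nondiagonal relations along any partition of their index set into nonempty parts gives an association scheme. *)

(* Defs.v *)
From HB Require Import structures.
From mathcomp Require Import all_boot all_order all_algebra all_field.
Set Implicit Arguments. Unset Strict Implicit. Unset Printing Implicit Defensive.
Import Order.TTheory GRing.Theory Num.Theory.
Local Open Scope ring_scope.

(* A "relation structure" on the finite set X = 'I_n is a function
   r : 'I_n -> 'I_n -> nat ; the relation R_i is {(x,y) | r x y = i}. *)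

Definition adj (n : nat) (r : 'I_n -> 'I_n -> nat) (i : nat) : 'M[algC]_n :=
  \matrix_(x, y) ((r x y == i)%:R : algC).

Definition pnum (n : nat) (r : 'I_n -> 'I_n -> nat) (i j : nat) (x y : 'I_n) : nat :=
  #|[set z | (r x z == i) && (r z y == j)]|.

Definition is_scheme (n D : nat) (r : 'I_n -> 'I_n -> nat) : Prop :=
  [/\ (forall x y, (r x y < D)%N),
      (forall i, (i < D)%N -> exists x y, r x y = i),
      (forall x y, (r x y == 0%N) = (x == y)),
      (forall i, (i < D)%N -> exists j, (j < D)%N /\ forall x y, r x y = i -> r y x = j) &
      (forall i j x y x' y', r x y = r x' y' -> pnum r i j x y = pnum r i j x' y')].

Definition commutative_scheme (n : nat) (r : 'I_n -> 'I_n -> nat) : Prop :=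
  forall i j x y, pnum r i j x y = pnum r j i x y.

Definition symmetric_rel (n : nat) (r : 'I_n -> 'I_n -> nat) : Prop :=
  forall x y, r x y = r y x.

Definition merge (n : nat) (f : nat -> nat) (r : 'I_n -> 'I_n -> nat) : 'I_n -> 'I_n -> nat :=
  fun x y => if r x y == 0%N then 0%N else f (r x y).

(* amorphic symmetric scheme with relations R_0..R_d: merging along any
   partition of {1..d} into m nonempty parts (encoded by a surjection
   f : {1..d} -> {1..m}) gives an association scheme *)
Definition amorphic (n d : nat) (r : 'I_n -> 'I_n -> nat) : Prop :=
  [/\ is_scheme d.+1 r, symmetric_rel r &
      forall (m : nat) (f : nat -> nat),
        (forall i, (1 <= i <= d)%N -> (1 <= f i <= m)%N) ->
        (forall j, (1 <= j <= m)%N -> exists i, (1 <= i <= d)%N /\ f i = j) ->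
        is_scheme m.+1 (merge f r)].

Definition symmetrization (n d : nat) (r : 'I_n -> 'I_n -> nat) : 'I_n -> 'I_n -> nat :=
  fun x y => if r x y == d.+1 then d else r x y.

Definition prim_idem (n d : nat) (r : 'I_n -> 'I_n -> nat) (E : nat -> 'M[algC]_n) : Prop :=
  [/\ E 0%N = (n%:R)^-1 *: const_mx 1,
      (forall j, (j <= d)%N -> exists c : nat -> algC, E j = \sum_(i < d.+1) c i *: adj r i),
      (forall i j, (i <= d)%N -> (j <= d)%N -> E i *m E j = if i == j then E i else 0),
      (forall j, (j <= d)%N -> E j != 0) &
      \sum_(j < d.+1) E j = 1%:M].

(* Main.v *)
Require Import Defs.
From HB Require Import structures.
From mathcomp Require Import all_boot all_order all_algebra all_field.
From mathcomp Require Import ring.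
Import Order.TTheory GRing.Theory Num.Theory.
Local Open Scope ring_scope.

Lemma aux_alg (R : comNzRingType) (x y z w : R) :
  x + y - (z + w) = (y - z) - (w - x).
Proof. by ring. Qed.

Theorem lemma3p2 (n d : nat) (r : 'I_n -> 'I_n -> nat) (E : nat -> 'M[algC]_n)
    (k : nat -> nat) (a b : nat -> algC) (i j : nat) :
  is_scheme d.+2 r ->
  commutative_scheme r ->
  (forall x y, r x y = d -> r y x = d.+1) ->
  (forall l x y, (l < d)%N -> r x y = l -> r y x = l) ->
  amorphic d (symmetrization d r) ->
  prim_idem d (symmetrization d r) E ->
  (forall l x, (l <= d)%N -> #|[set y | symmetrization d r x y == l]| = k l) ->
  (forall l, (l <= d)%N -> adj (symmetrization d r) l *m E 0%N = (k l)%:R *: E 0%N) ->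
  (forall l, (1 <= l <= d)%N -> adj (symmetrization d r) l *m E l = b l *: E l) ->
  (forall l m, (1 <= l <= d)%N -> (1 <= m <= d)%N -> m != l ->
     adj (symmetrization d r) l *m E m = a l *: E m) ->
  (forall l, (1 <= l <= d)%N -> a l != b l) ->
  (3 <= d)%N ->
  (1 <= i)%N -> (i < j)%N -> (j <= d)%N ->
  a i + b j = a j + b i.
Proof.
move=> [Hlt _ Hdiag _ _] _ _ _ _ [HE0 _ Horth Hnz _] _ _ Hb Ha _ d3 i1 ij jd.
set s := symmetrization d r.
have sle : forall x y, (s x y < d.+1)%N.
  move=> x y; rewrite /s /symmetrization; case: eqP => [_|h]; first by [].
  by have := Hlt x y; rewrite ltnS leq_eqVlt => /orP [/eqP h'|//]; case: h.
have sumA : \sum_(l < d.+1) adj s l = const_mx 1.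
  apply/matrixP => x y; rewrite summxE !mxE.
  rewrite (bigD1 (Ordinal (sle x y))) //= !mxE eqxx big1 ?addr0 //.
  move=> l; rewrite mxE => hl; case: eqP => // h; exfalso; move/eqP: hl; apply.
  by apply/val_inj; rewrite /= h.
have A0 : adj s 0 = 1%:M.
  apply/matrixP => x y; rewrite !mxE /s /symmetrization.
  case: (r x y =P d.+1) => [h|_]; last by rewrite Hdiag.
  have -> : (x == y) = false by rewrite -Hdiag h.
  by have -> : (d == 0%N) = false by case: (d) d3.
have npos : (0 < n)%N.
  case: (posnP n) => // n0; exfalso; move/negP: (Hnz 1%N (leq_trans i1 (ltnW (leq_trans ij jd)))); apply.
  by apply/eqP/matrixP => x; have := ltn_ord x; rewrite {2}n0.
have nz : (n%:R : algC) != 0 by rewrite pnatr_eq0 -lt0n.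
have J : const_mx 1 = n%:R *: E 0%N by rewrite HE0 scalerA mulfV // scale1r.
set T := \sum_(l < d.+1) (if l == 0%N :> nat then 1 else a l).
have key : forall m, (1 <= m <= d)%N -> T + (b m - a m) = 0.
  move=> m /andP [m1 md].
  have : (\sum_(l < d.+1) adj s l) *m E m = 0.
    rewrite sumA J -scalemxAl Horth //.
    by rewrite (negbTE (_ : 0%N != m)) ?scaler0 // eq_sym -lt0n.
  rewrite mulmx_suml.
  rewrite (eq_bigr (fun l : 'I_d.+1 => ((if l == 0%N :> nat then 1 else a l) + (l == m :> nat)%:R * (b m - a m)) *: E m)); last first.
    move=> l _; have ld := ltn_ord l; rewrite ltnS in ld.
    case: (posnP l) => [->|l0].
      by rewrite A0 mul1mx (negbTE (_ : 0%N != m)) ?mul0r ?addr0 ?scale1r // eq_sym -lt0n.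
    idtac.
    case: eqP => [->|lm].
      by rewrite Hb ?m1 // mul1r addrC subrK.
    rewrite mul0r addr0 Ha ?l0 ?m1 //; apply/eqP => h; apply: lm; by rewrite h.
  rewrite -scaler_suml big_split /= => /eqP; rewrite scalemx_eq0 (negbTE (Hnz m md)) orbF.
  rewrite -/T -big_distrl /= (bigD1 (Ordinal (md : (m < d.+1)%N))) //= eqxx big1 ?addr0 ?mul1r.
    by move/eqP.
  by move=> l hl; case: eqP => // h; exfalso; move/eqP: hl; apply; apply/val_inj.
have hi := key i (introT andP (conj i1 (ltnW (leq_trans ij jd)))).
have hj := key j (introT andP (conj (leq_trans i1 (ltnW ij)) jd)).
have e : b i - a i = b j - a j by apply: (addrI T); rewrite hi hj.
by apply/eqP; rewrite -subr_eq0 aux_alg e subrr.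
Qed.
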